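(* Let $x\in\mathbb{R}^n$ and $\widehat{L}=L-P_{T_z}LP_{T_x^\perp}$. Then $\widehat{L}$ has full column rank, $\widehat{L}^\top\widehat{L}$ is diagonal and invertible, and $L^\top\widehat{L}=\widehat{L}^\top\widehat{L}$.
   Context: Let $n,N\in\mathbb{N}$, let $G_1,\dots,G_N\subseteq\{1,\dots,n\}$ be nonempty groups, possibly overlapping, with $\bigcup_iG_i=\{1,\dots,n\}$, and weights $w_i>0$. $x_G$ is the subvector of $x$ indexed by $G$ (increasing order). Let $p=\sum_i|G_i|$, partition $\{1,\dots,p\}$ into consecutive blocks $J_i=\{\sum_{j<i}|G_j|+1,\dots,\sum_{j\le i}|G_j|\}$, and define $L\in\mathbb{R}^{p\times n}$ by $(Lx)_{J_i}=w_ix_{G_i}$. For $x\in\mathbb{R}^n$: $\mathcal{I}_x=\{t:x_{G_t}\ne0\}$; $\mathcal{E}_x=\{1,\dots,n\}\setminus\bigcup_{t\notin\mathcal{I}_x}G_t$, $T_x=\{x'\in\mathbb{R}^n:\mathrm{supp}(x')\subseteq\mathcal{E}_x\}$; $\mathcal{E}_z=\bigcup_{t\in\mathcal{I}_x}J_t$, $T_z=\{z'\in\mathbb{R}^p:\mathrm{supp}(z')\subseteq\mathcal{E}_z\}$. $P_T$ is the orthogonal (coordinate) projection onto $T$ and $T^\perp$ its orthogonal complement. *)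

(* Defs.v *)
From HB Require Import structures.
From mathcomp Require Import all_boot all_order all_algebra.
Set Implicit Arguments. Unset Strict Implicit. Unset Printing Implicit Defensive.
Import Order.TTheory GRing.Theory Num.Theory.
Local Open Scope ring_scope.

Section GroupLasso.
Variables (R : realFieldType) (n N : nat).
Variables (G : 'I_N -> {set 'I_n}) (w : 'I_N -> R).

Notation p := (\sum_(i < N) #|G i|)%N.

(* Block i of L: the |G_i| x n matrix whose r-th row is w_i e_{g_r}^T, where
   g_0 < g_1 < ... are the elements of G_i in increasing order
   (enum of a finset of 'I_n lists elements in increasing order). *)
Definition Lblock (i : 'I_N) : 'M[R]_(#|G i|, n) :=
  \matrix_(r < #|G i|, c < n) (w i * ((@enum_val _ (mem (G i)) r == c)%:R)).

(* L : p x n, blocks J_i consecutive: (L x)_{J_i} = w_i x_{G_i}. *)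
Definition Lmat : 'M[R]_(p, n) := \mxcol_(i < N) Lblock i.

Definition Iset (x : 'cV[R]_n) : {set 'I_N} :=
  [set t | [exists j in G t, x j 0 != 0]].

Definition Ex (x : 'cV[R]_n) : {set 'I_n} :=
  ~: (\bigcup_(t | t \notin Iset x) G t).

(* Orthogonal projection onto T_x^perp = { x' | supp x' subset complement of E_x } *)
Definition P_Tx_perp (x : 'cV[R]_n) : 'M[R]_n :=
  diag_mx (\row_(j < n) (j \notin Ex x)%:R).

(* Orthogonal projection onto T_z = { z' | supp z' subset E_z },
   E_z = union_{t in I_x} J_t : block-diagonal with identity blocks on J_t, t in I_x. *)
Definition P_Tz (x : 'cV[R]_n) : 'M[R]_p :=
  \mxdiag_(i < N) (((i \in Iset x)%:R)%:M : 'M[R]_(#|G i|)).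

Definition Lhat (x : 'cV[R]_n) : 'M[R]_(p, n) :=
  Lmat - P_Tz x *m Lmat *m P_Tx_perp x.

End GroupLasso.

(* Main.v *)
Require Import Defs.
From HB Require Import structures.
From mathcomp Require Import all_boot all_order all_algebra ring.
Import Order.TTheory GRing.Theory Num.Theory.
Local Open Scope ring_scope.

Lemma mxcolE (R : Type) (N m : nat) (p_ : 'I_N -> nat) (B_ : forall i, 'M[R]_(p_ i, m)) k j :
  (\mxcol_i B_ i) k j = B_ (tagnat.sig1 k) (tagnat.sig2 k) j.
Proof.
have := congr1 (fun M : 'M_(1, m) => M 0 j) (row_mxcol B_ k).
by rewrite !mxE.
Qed.

Section S.
Variables (R : realFieldType) (n N : nat) (G : 'I_N -> {set 'I_n}) (w : 'I_N -> R) (x : 'cV[R]_n).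
Let d i : R := (i \in Iset G x)%:R.
Let e (j : 'I_n) : R := (j \notin Ex G x)%:R.

Lemma LhatE : Lhat G w x = \mxcol_i (Lblock G w i - (d i)%:M *m Lblock G w i *m P_Tx_perp G x).
Proof.
by rewrite /Lhat /Lmat /P_Tz mul_mxdiag_mxcol mxcol_mul -mxcolB.
Qed.

Lemma LhatE2 k j : Lhat G w x k j =
  let t := tagnat.sig k in
  w (tag t) * (enum_val (tagged t) == j)%:R * (1 - d (tag t) * e j).
Proof.
have hd m (A : 'M[R]_(m, n)) v r c : (A *m diag_mx v) r c = A r c * v 0 c.
  by rewrite mul_mx_diag mxE.
rewrite LhatE mxcolE [in LHS]mxE [in LHS]mxE [in LHS]mxE /P_Tx_perp hd mul_scalar_mx !mxE /=.
rewrite /tagnat.sig1 /tagnat.sig2 /e; ring.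
Qed.

Lemma LmatE k j : Lmat G w k j =
  let t := tagnat.sig k in
  w (tag t) * (enum_val (tagged t) == j)%:R.
Proof. by rewrite /Lmat mxcolE !mxE. Qed.

Lemma c01 i j : (1 - d i * e j) * (1 - d i * e j) = 1 - d i * e j.
Proof. by rewrite /d /e; case: (i \in _); case: (j \in _); rewrite /= ?mulr0 ?mulr1 ?subr0 ?subrr ?mulr0 ?mul1r. Qed.

Lemma term k a b : Lhat G w x k a * Lhat G w x k b = Lmat G w k a * Lhat G w x k b.
Proof.
rewrite !LhatE2 LmatE /=.
set v := enum_val _.
case Ea: (_ == a); last by rewrite !(mulr0, mul0r).
move/eqP: Ea => ea; subst a.
case Eb: (_ == b); last by rewrite !(mulr0, mul0r).
move/eqP: Eb => eb; subst b.
rewrite !mulr1 -[in RHS]c01; ring.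
Qed.

Lemma term0 k a b : a != b -> Lhat G w x k a * Lhat G w x k b = 0.
Proof.
move=> nab; rewrite !LhatE2 /=.
set v := enum_val _.
case Ea: (_ == a); last by rewrite !(mulr0, mul0r).
move/eqP: Ea => ea; subst a.
case Eb: (_ == b); last by rewrite !(mulr0, mul0r).
move/eqP: Eb => eb; subst b; by rewrite eqxx in nab.
Qed.

Lemma exists_nz j : \bigcup_(i < N) G i = [set: 'I_n] -> (forall i, 0 < w i) ->
  exists k, Lhat G w x k j != 0.
Proof.
move=> hcover hw.
have [i ji hi] : exists2 i, j \in G i & d i * e j = 0.
  case: (boolP (j \in Ex G x)) => hj.
    have : j \in \bigcup_(i < N) G i by rewrite hcover inE.
    by case/bigcupP=> i _ ji; exists i => //; rewrite /e hj mulr0.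
  move: hj; rewrite /Ex inE negbK => /bigcupP [t ht jt].
  by exists t => //; rewrite /d (negbTE ht) mul0r.
pose r := enum_rank_in ji j.
exists (@tagnat.Rank _ (fun i => #|G i|) i r).
rewrite LhatE2 /= /tagnat.Rank tagnat.rankK /= enum_rankK_in // eqxx hi subr0 !mulr1.
by rewrite gt_eqF ?hw.
Qed.
End S.

Theorem lemmaA4 (R : realFieldType) (n N : nat)
  (G : 'I_N -> {set 'I_n}) (w : 'I_N -> R)
  (hG : forall i, G i != set0)
  (hcover : \bigcup_(i < N) G i = [set: 'I_n])
  (hw : forall i, 0 < w i)
  (x : 'cV[R]_n) :
  let Lh := Lhat G w x in
  [/\ \rank Lh = n,
      is_diag_mx (Lh^T *m Lh),
      Lh^T *m Lh \in unitmx
    & (Lmat G w)^T *m Lh = Lh^T *m Lh].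
Proof.
move=> Lh.
have trE (a : 'I_n) k : Lh^T a k = Lh k a by rewrite mxE.
have trE2 (a : 'I_n) k : (Lmat G w)^T a k = Lmat G w k a by rewrite mxE.
have hdiag : is_diag_mx (Lh^T *m Lh).
  apply/is_diag_mxP => a b nab; rewrite !mxE; apply: big1 => k _.
  rewrite trE; apply: term0; apply: contra nab => /eqP -> //.
have hpos j : 0 < (Lh^T *m Lh) j j.
  have [k0 hk0] := @exists_nz R n N G w x j hcover hw.
  rewrite !mxE (bigD1 k0) //= trE.
  apply: (@lt_le_trans _ _ (Lh k0 j * Lh k0 j)).
    by rewrite lt_def mulf_neq0 //= (sqr_ge0 (_ : R)).
  rewrite lerDl; apply: sumr_ge0 => k _; rewrite trE (sqr_ge0 (_ : R)) //.
have hunit : Lh^T *m Lh \in unitmx.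
  rewrite unitmxE unitfE det_trig ?is_diag_mx_is_trig //.
  by apply/prodf_neq0 => j _; rewrite gt_eqF.
split => //.
- apply/eqP; rewrite eqn_leq rank_leq_col /=.
  by rewrite -{1}(mxrank_unit hunit) mxrankM_maxr.
- apply/matrixP => a b; rewrite !mxE; apply: eq_bigr => k _.
  by rewrite trE trE2 term.
Qed.
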